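(* Let $N\ge 2$ be an integer and let $\Delta_N=\{p=(p_1,\dots,p_N)\in[0,1]^N:\ \sum_{i=1}^N p_i=1\}$. For $p\in\Delta_N$ define the normalized Shannon entropy $$H(p)=\frac{1}{\log N}\Big(-\sum_{i=1}^N p_i\log p_i\Big)\quad(\text{with }0\log 0=0),$$ the total variation distance to the uniform distribution $TV(p,q)=\frac12\sum_{i=1}^N\big|p_i-\frac1N\big|$ with $q=(1/N,\dots,1/N)$, and the statistical complexity $$C_{TV}(p)=H(p)\,TV(p,q)^2=-\frac{1}{4\log N}\Big(\sum_{i=1}^N p_i\log p_i\Big)\Big(\sum_{i=1}^N\Big|p_i-\frac1N\Big|\Big)^2.$$ Then the maximum of $C_{TV}$ over $\Delta_N$ is achieved on a distribution which, up to a permutation of the coordinates, belongs to the family $$p_i=\frac{1-p_{\max}}{K}\ \ (i=1,\dots,K),\qquad p_i=\frac{p_{\max}}{N-K}\ \ (i=K+1,\dots,N),$$ for some integer $K\in\{1,\dots,N-1\}$ and some constant $p_{\max}\in[0,1]$. *)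

(* Defs.v *)
From HB Require Import structures.
From mathcomp Require Import all_boot all_order all_algebra all_fingroup.
From mathcomp Require Import all_classical all_reals all_analysis.
Set Implicit Arguments. Unset Strict Implicit. Unset Printing Implicit Defensive.
Import Order.TTheory GRing.Theory Num.Theory.
Local Open Scope ring_scope.

Section Defs.
Variable R : realType.

Definition simplex (N : nat) (p : 'I_N -> R) : Prop :=
  (forall i, 0 <= p i <= 1) /\ \sum_(i < N) p i = 1.

Definition xlnx (x : R) : R := if x == 0 then 0 else x * ln x.

Definition entropyN (N : nat) (p : 'I_N -> R) : R :=
  (- \sum_(i < N) xlnx (p i)) / ln N%:R.

Definition TVunif (N : nat) (p : 'I_N -> R) : R :=
  (1 / 2) * \sum_(i < N) `|p i - 1 / N%:R|.

Definition CTV (N : nat) (p : 'I_N -> R) : R := entropyN p * TVunif p ^+ 2.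

End Defs.

(* Main.v *)
Require Import Defs.
From HB Require Import structures.
From mathcomp Require Import all_boot all_order all_algebra all_fingroup.
From mathcomp Require Import all_classical all_reals all_analysis.
From mathcomp Require Import ring lra.
Import Order.TTheory GRing.Theory Num.Theory.
Import numFieldNormedType.Exports.
Local Open Scope ring_scope.

Section S.
Variable R : realType.

Lemma xlnxE (x : R) : xlnx x = x * ln x.
Proof. by rewrite /xlnx; case: eqP => // ->; rewrite mul0r. Qed.

Lemma xlnx_small (t : R) : 0 < t -> - (t * ln t) < 2 * Num.sqrt t.
Proof.
move=> t0; set s := Num.sqrt t.
have s0 : 0 < s by rewrite sqrtr_gt0.
have ts : t = s ^+ 2 by rewrite sqr_sqrtr // ltW.
rewrite ts lnXn // mulr2n.
have : ln (s^-1) < s^-1 by apply: ln_sublinear; rewrite invr_gt0.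
rewrite lnV ?posrE // => h.
have e : - (s ^+ 2 * (ln s + ln s)) = 2 * (s^+2 * (- ln s)) by rewrite mulrDr; ring.
rewrite e ltr_pM2l // expr2 -mulrA.
rewrite -[X in _ < X]mulr1 ltr_pM2l //.
by rewrite -(ltr_pM2l s0) mulfV ?gt_eqF // in h.
Qed.

Lemma xlnx_cont : continuous (@xlnx R).
Proof.
move=> a; rewrite /continuous_at. case: (ltrgtP a 0) => [a0|a0|->].
- have -> : xlnx a = 0 by rewrite xlnxE ln0 ?mulr0 // ltW.
  apply/cvgrPdist_lt => e e0; near=> x.
  rewrite xlnxE ln0 ?mulr0 ?subr0 ?normr0 //.
  near: x; exact: lt_le_nbhsl.
- have -> : @xlnx R = (fun x : R => x * ln x) by apply: funext => x; rewrite xlnxE.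
  by apply: cvgM; [exact: cvg_id| exact: continuous_ln].
- apply/cvgrPdist_lt => e e0.
  have e20 : 0 < e / 2 by rewrite divr_gt0.
  near=> t.
  rewrite /xlnx eqxx sub0r normrN.
  case: eqP => [_|/eqP tn0]; first by rewrite normr0.
  case: (ltrgtP t 0) => [tl|tg|/eqP]; last by rewrite (negbTE tn0).
  + by rewrite ln0 ?mulr0 ?normr0 // ltW.
  + have tl1 : t < 1 by near: t; apply: lt_nbhsl; exact: ltr01.
    have le : t * ln t <= 0 by apply: mulr_ge0_le0; [exact: ltW | apply: ln_le0; exact: ltW].
    rewrite ler0_norm //. have h := (@xlnx_small t tg). apply: (lt_trans h).
    have ht : t < (e/2)^+2 by near: t; apply: lt_nbhsl; rewrite exprn_gt0.
    have : Num.sqrt t < e / 2.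
      by rewrite -(@ger0_norm _ (e/2)) ?ltW // -sqrtr_sqr ltr_sqrt // exprn_gt0.
    move=> h2; by rewrite -ltr_pdivlMl // mulrC.
Unshelve. all: by end_near. Qed.

Lemma tangent (c x : R) : 0 < c -> 0 <= x -> x * ln c + x - c <= xlnx x.
Proof.
move=> c0; rewrite le0r => /orP[/eqP->|x0].
  by rewrite /xlnx eqxx mul0r !add0r oppr_le0 ltW.
rewrite xlnxE.
have h : ln (1 + (c / x - 1)) <= c / x - 1.
  by apply: le_ln1Dx; rewrite ltrBrDl subrr divr_gt0.
rewrite addrC subrK ln_div ?posrE // in h.
have := h; rewrite -(ler_pM2l x0) mulrBr mulrBr mulrCA mulfV ?gt_eqF // mulr1 mulr1.
move=> h2; lra.
Qed.

Lemma xlnx0 : xlnx (0:R) = 0.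
Proof. by rewrite /xlnx eqxx. Qed.

Lemma xlnx_le0 (x : R) : 0 <= x <= 1 -> xlnx x <= 0.
Proof.
move=> /andP[x0 x1]; rewrite xlnxE.
by apply: mulr_ge0_le0 => //; apply: ln_le0.
Qed.

Variable N : nat.
Hypothesis hN : (2 <= N)%N.

Lemma jensen (A : {set 'I_N}) (q : 'I_N -> R) : (forall i, 0 <= q i) -> (0 < #|A|)%N ->
  #|A|%:R * xlnx ((\sum_(i in A) q i) / #|A|%:R) <= \sum_(i in A) xlnx (q i).
Proof.
move=> q0 A0.
have k0 : 0 < #|A|%:R :> R by rewrite ltr0n.
set m := \sum_(i in A) q i.
have m0 : 0 <= m by apply: sumr_ge0.
move: m0; rewrite le0r => /orP[/eqP m0|m0].
  have qz : forall i, i \in A -> q i = 0.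
    by apply/psumr_eq0P; [move=> i _; exact: q0| exact: m0].
  rewrite m0 mul0r xlnx0 mulr0 big1 // => i iA; by rewrite qz // xlnx0.
set c := m / #|A|%:R.
have c0 : 0 < c by rewrite divr_gt0.
apply: (@le_trans _ _ (\sum_(i in A) (q i * ln c + q i - c))); last first.
  by apply: ler_sum => i _; apply: tangent.
rewrite big_split /= big_split /= sumr_const -mulr_suml -/m.
have e0 : #|A|%:R * c = m by rewrite /c mulrC -mulrA mulVf ?gt_eqF // mulr1.
have e1 : c *+ #|A| = m by rewrite -mulr_natr mulrC e0.
have e2 : #|A|%:R * (c * ln c) = m * ln c by rewrite mulrA e0.
rewrite xlnxE -/c ?mulNrn e1 e2 -?sumrN ?sumr_const ?mulNrn ?e1 ?sumrN -/m; lra.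
Qed.


Definition F (K : nat) (a b : R) : R :=
  (- (K%:R * xlnx a + (N - K)%:R * xlnx b)) / ln N%:R *
  ((1 / 2) * (K%:R * `|a - 1 / N%:R| + (N - K)%:R * `|b - 1 / N%:R|)) ^+ 2.

Definition G (K : nat) (t : R) : R := F K ((1 - t) / K%:R) (t / (N - K)%:R).

Lemma split_sum (S : {set 'I_N}) (f : 'I_N -> R) :
  \sum_(i < N) f i = \sum_(i in S) f i + \sum_(i in ~: S) f i.
Proof.
rewrite (bigID (mem S)) /=; congr (_ + _); apply: eq_bigl => i; by rewrite !inE.
Qed.

Lemma cardC' (S : {set 'I_N}) : #|~: S| = (N - #|S|)%N.
Proof. have := cardsC S; rewrite card_ord; move: (#|S|) (#|~: S|) => a b <-; by rewrite addKn. Qed.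

Lemma sum_two (S : {set 'I_N}) (g : R -> R) (a b : R) (r : 'I_N -> R) :
  (forall i, r i = if i \in S then a else b) ->
  \sum_(i < N) g (r i) = #|S|%:R * g a + (N - #|S|)%:R * g b.
Proof.
move=> hr; rewrite (split_sum S).
rewrite (eq_bigr (fun=> g a)); last by move=> i iS; rewrite hr iS.
rewrite [X in _ + X](eq_bigr (fun=> g b)); last first.
  by move=> i; rewrite !inE => /negbTE iS; rewrite hr iS.
by rewrite !sumr_const cardC' !mulr_natl.
Qed.

Lemma CTV_two (S : {set 'I_N}) (a b : R) (r : 'I_N -> R) :
  (forall i, r i = if i \in S then a else b) -> CTV r = F #|S| a b.
Proof.
move=> hr; rewrite /CTV /entropyN /TVunif /F.
by rewrite (sum_two S (@xlnx R) a b r hr) (sum_two S (fun x => `|x - 1 / N%:R|) a b r hr).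
Qed.

Lemma lnN_gt0 : 0 < ln (N%:R : R).
Proof. by apply: ln_gt0; rewrite ltr1n. Qed.

Lemma F_ge0 K a b : (K <= N)%N -> 0 <= a <= 1 -> 0 <= b <= 1 -> 0 <= F K a b.
Proof.
move=> KN ha hb; rewrite /F; apply: mulr_ge0; last exact: sqr_ge0.
apply: divr_ge0; last exact: ltW lnN_gt0.
rewrite oppr_ge0 -[0]addr0; apply: lerD; apply: mulr_ge0_le0 => //; exact: xlnx_le0.
Qed.

Lemma G_cont K : continuous (G K).
Proof.
move=> t; rewrite /G /F.
have cu : continuous (fun t : R => (1 - t) / K%:R).
  by move=> x; apply: cvgMr_tmp; apply: cvgB; [exact: cvg_cst | exact: cvg_id].
have cv : continuous (fun t : R => t / (N - K)%:R).
  by move=> x; apply: cvgMr_tmp; exact: cvg_id.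
apply: cvgM.
  apply: cvgMr_tmp; apply: cvgN; apply: cvgD; apply: cvgMl_tmp.
    exact: (continuous_comp (cu t) (xlnx_cont _)).
  exact: (continuous_comp (cv t) (xlnx_cont _)).
have cY : continuous (fun t : R => (1 / 2) * (K%:R * `|(1 - t) / K%:R - 1 / N%:R| + (N - K)%:R * `|t / (N - K)%:R - 1 / N%:R|)).
  move=> x; apply: cvgMl_tmp; apply: cvgD; apply: cvgMl_tmp; apply: cvg_norm; apply: cvgB;
    try exact: cvg_cst.
    exact: cu.
  exact: cv.
exact: (continuous_comp (cY t) (@exprn_continuous R 2 _)).
Qed.


Lemma N0 : (0 < N)%N.
Proof. by apply: leq_trans hN. Qed.

Lemma sum_cst (A : {set 'I_N}) : \sum_(i in A) (1 / N%:R : R) = #|A|%:R / N%:R.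
Proof. by rewrite sumr_const -(mulr_natl (1 / N%:R)) mul1r. Qed.

Lemma reduce (q : 'I_N -> R) : simplex q -> CTV q <= 0 \/
  exists K, [/\ (1 <= K)%N, (K <= N - 1)%N & exists2 t, 0 <= t <= 1 & CTV q <= G K t].
Proof.
case=> hq hs.
have q0 i : 0 <= q i by case/andP: (hq i).
have n0 : 0 < N%:R :> R by rewrite ltr0n N0.
set S := [set i | q i < 1 / N%:R].
have inS i : (i \in S) = (q i < 1 / N%:R) by rewrite inE.
have ninS i : (i \in ~: S) = (1 / N%:R <= q i) by rewrite !inE -leNgt.
case: (posnP #|S|) => [S0 | Spos].
  left.
  have S0' := cards0_eq S0.
  have h : \sum_(i < N) `|q i - 1 / N%:R| = 0.
    rewrite (eq_bigr (fun i => q i - 1 / N%:R)); last first.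
      move=> i _; apply: ger0_norm; rewrite subr_ge0 -ninS S0' !inE //.
    rewrite sumrB hs sumr_const card_ord -(mulr_natl (1 / N%:R)) mul1r mulfV ?gt_eqF //.
    by rewrite subrr.
  by rewrite /CTV /TVunif h mulr0 expr0n /= mulr0.
case: (ltnP #|S| N) => SN; last first.
  exfalso.
  have hC : #|~: S| = 0%N.
    rewrite cardC'; apply/eqP; rewrite subn_eq0 //.
  have allS i : i \in S.
    by have := cards0_eq hC => /setP /(_ i); rewrite !inE => /negbFE.
  have : \sum_(i < N) q i < \sum_(i < N) (1 / N%:R : R).
    apply: ltr_sum; last by move=> i _; rewrite -inS.
    by apply/hasP; exists (Ordinal N0); rewrite ?mem_index_enum.
  by rewrite hs sumr_const card_ord -(mulr_natl (1 / N%:R)) mul1r mulfV ?gt_eqF // ltxx.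
right; exists #|S|; split => //.
  by rewrite subn1 -ltnS prednK // N0.
set K := #|S|.
set m := \sum_(i in S) q i.
have hsplit := split_sum S q; rewrite hs -/m in hsplit.
have hC : \sum_(i in ~: S) q i = 1 - m by rewrite hsplit addrC addKr.
have m0 : 0 <= m by apply: sumr_ge0.
have mc0 : 0 <= 1 - m by rewrite -hC; apply: sumr_ge0.
exists (1 - m); first by apply/andP; split; lra.
have mK : m <= K%:R / N%:R.
  rewrite -sum_cst; apply: ler_sum => i; rewrite inS; exact: ltW.
have mC : (N - K)%:R / N%:R <= 1 - m.
  rewrite -hC -cardC' -sum_cst; apply: ler_sum => i; rewrite ninS //.
have k0 : 0 < K%:R :> R by rewrite ltr0n.
have k'0 : 0 < (N - K)%:R :> R by rewrite ltr0n subn_gt0.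
have e1 : 1 - (1 - m) = m by ring.
rewrite /G /F /CTV /entropyN /TVunif e1.
have hT : \sum_(i < N) `|q i - 1 / N%:R| =
    K%:R * `|m / K%:R - 1 / N%:R| + (N - K)%:R * `|(1 - m) / (N - K)%:R - 1 / N%:R|.
  rewrite (split_sum S).
  rewrite (eq_bigr (fun i => 1 / N%:R - q i)); last first.
    by move=> i; rewrite inS => h; rewrite distrC ger0_norm // subr_ge0 ltW.
  rewrite [X in _ + X](eq_bigr (fun i => q i - 1 / N%:R)); last first.
    by move=> i; rewrite ninS => h; rewrite ger0_norm // subr_ge0.
  rewrite !sumrB sum_cst hC -/m sum_cst cardC' -/K.
  have a1 : m / K%:R <= 1 / N%:R.
    by rewrite ler_pdivrMr // mulrC mulrA mulr1.
  have a2 : 1 / N%:R <= (1 - m) / (N - K)%:R.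
    by rewrite ler_pdivlMr // mulrC mulrA mulr1.
  rewrite (ler0_norm (_ : m / K%:R - 1 / N%:R <= 0)); last by rewrite subr_le0.
  rewrite (ger0_norm (_ : 0 <= (1 - m) / (N - K)%:R - 1 / N%:R)); last by rewrite subr_ge0.
  by field; rewrite !gt_eqF.
rewrite hT.
apply: ler_wpM2r; first exact: sqr_ge0.
apply: ler_wpM2r; first by rewrite invr_ge0 ltW // lnN_gt0.
rewrite lerN2 (split_sum S); apply: lerD.
  exact: jensen.
rewrite -hC -cardC'; apply: jensen => //; rewrite cardC' subn_gt0 //.
Qed.

End S.

Lemma max_seq (R : realType) (f : nat -> R) (s : seq nat) : s != [::] ->
  exists2 k, k \in s & forall j, j \in s -> f j <= f k.
Proof.
elim: s => // x s IH _.
case: (eqVneq s [::]) => [->|sn].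
  by exists x; [rewrite inE | move=> j; rewrite inE => /eqP ->].
have [k ks hk] := IH sn.
case: (leP (f x) (f k)) => h.
  exists k; first by rewrite inE ks orbT.
  by move=> j; rewrite inE => /orP[/eqP->|/hk].
exists x; first by rewrite inE eqxx.
move=> j; rewrite inE => /orP[/eqP->//|/hk hj]; exact: le_trans hj (ltW h).
Qed.

Lemma card_lt (N K : nat) (hK : (K <= N)%N) : #|[set i : 'I_N | (i < K)%N]| = K.
Proof.
have -> : [set i : 'I_N | (i < K)%N] = [set widen_ord hK j | j in 'I_K].
  apply/setP => i; rewrite inE; apply/idP/imsetP => [iK | [j _ ->]].
    by exists (Ordinal iK) => //; apply: val_inj.
  exact: (ltn_ord j).
rewrite card_imset ?card_ord // => a b /(congr1 val) /= ab; exact: val_inj.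
Qed.

Theorem lemma4 (R : realType) (N : nat) (hN : (2 <= N)%N) :
  exists p : 'I_N -> R,
    simplex p /\
    (forall q : 'I_N -> R, simplex q -> CTV q <= CTV p) /\
    exists (s : {perm 'I_N}) (K : nat) (pmax : R),
      [/\ (1 <= K)%N, (K <= N - 1)%N, 0 <= pmax <= 1 &
        forall i : 'I_N,
          p (s i) = if (i < K)%N then (1 - pmax) / K%:R
                    else pmax / (N - K)%:R].
Proof.
have hEVT : forall K : nat, exists t : R, 0 <= t <= 1 /\
    forall u, 0 <= u <= 1 -> G R N K u <= G R N K t.
  move=> K.
  have [c hc hmax] := @EVT_max R (G R N K) 0 1 ler01 (continuous_subspaceT (@G_cont R N K)).
  exists c; split; first by move: hc; rewrite in_itv.
  by move=> u hu; apply: hmax; rewrite in_itv.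
have [tf htf] := choice hEVT.
have N0 : (0 < N)%N by apply: leq_trans hN.
have hne : iota 1 (N - 1) != [::].
  by rewrite -size_eq0 size_iota subn_eq0 -ltnNge.
have [K hK hmaxK] := @max_seq R (fun K => G R N K (tf K)) _ hne.
have [K1 KN1] : (1 <= K)%N /\ (K <= N - 1)%N.
  move: hK; rewrite mem_iota => /andP[h1 h2]; split => //.
have KN : (K < N)%N by move: KN1; rewrite subn1 -ltnS prednK.
have [ht _] := htf K.
set t := tf K.
have t0 : 0 <= t by case/andP: ht.
have t1 : t <= 1 by case/andP: ht.
set p := fun i : 'I_N => if (i < K)%N then (1 - t) / K%:R else t / (N - K)%:R.
set S0 := [set i : 'I_N | (i < K)%N].
have hp : forall i, p i = if i \in S0 then (1 - t) / K%:R else t / (N - K)%:R.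
  by move=> i; rewrite /p inE.
have cS0 : #|S0| = K by apply: card_lt; exact: ltnW.
have k0 : 0 < K%:R :> R by rewrite ltr0n.
have k'0 : 0 < (N - K)%:R :> R by rewrite ltr0n subn_gt0.
have k1 : 1 <= K%:R :> R by rewrite ler1n.
have k'1 : 1 <= (N - K)%:R :> R by rewrite ler1n subn_gt0.
have ba : 0 <= (1 - t) / K%:R <= 1.
  apply/andP; split; first by apply: divr_ge0; [lra | exact: ltW].
  by rewrite ler_pdivrMr // mul1r; lra.
have bb : 0 <= t / (N - K)%:R <= 1.
  apply/andP; split; first by apply: divr_ge0; [lra | exact: ltW].
  by rewrite ler_pdivrMr // mul1r; lra.
have CTVp : CTV p = G R N K t by rewrite (@CTV_two R N S0 _ _ p hp) cS0.
exists p; split.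
  split.
    by move=> i; rewrite /p; case: ifP.
  have := @sum_two R N S0 (fun x => x) _ _ p hp; rewrite /= => ->.
  rewrite cS0; field; rewrite !gt_eqF //.
split.
  move=> q hq; case: (@reduce R N hN q hq) => [h | [K' [h1 h2 [u hu hle]]]].
    apply: le_trans h _; rewrite CTVp /G; apply: F_ge0 => //; exact: ltnW.
  apply: le_trans hle _; apply: le_trans ((htf K').2 u hu) _.
  rewrite CTVp; apply: (hmaxK K'); rewrite mem_iota h1 /=.
  by rewrite add1n ltnS.
exists 1%g, K, t; split => //.
by move=> i; rewrite perm1.
Qed.
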